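(* $P_2 < P_1$, i.e. $P_2\le P_1$ but not $P_1\le P_2$. Moreover, for every finite digraph $G$ with $G<P_1$ we have $G\le P_2$; that is, $P_2$ is the unique coatom (unique greatest lower bound of $P_1$) of $\mathfrak P_{\mathrm{Digraphs}}$.
   Context: A digraph is a pair $(V,E)$ with $E\subseteq V^2$. A homomorphism maps edges to edges; homomorphic equivalence means homomorphisms in both directions. A primitive positive formula is $\exists y_1,\dots,y_n(\psi_1\wedge\dots\wedge\psi_m)$ where each $\psi_i$ is $\bot$, $z_1=z_2$, or $E(z_1,z_2)$. For $H=(V,E)$, a pp power of dimension $d$ is the digraph on $V^d$ with edges $\{(u,v): \phi(u,v)\text{ holds in }H\}$ for a pp formula $\phi(x_1,\dots,x_d,y_1,\dots,y_d)$. $H\le G$ means $G$ is homomorphically equivalent to a pp power of $H$; $H<G$ means $H\le G$ and not $G\le H$; $\mathfrak P_{\mathrm{Digraphs}}$ is the poset of finite digraphs modulo mutual $\le$. $P_1$ is one vertex with no edges; $P_2$ has vertices $\{0,1\}$ and the single edge $(0,1)$. *)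

(* Defs.v *)
From Stdlib Require Import List.
From mathcomp Require Import all_boot.
Set Implicit Arguments. Unset Strict Implicit. Unset Printing Implicit Defensive.

Record digraph := Digraph { vert : finType; edge : vert -> vert -> Prop }.

Definition hom (G H : digraph) (f : vert G -> vert H) : Prop :=
  forall u v, edge u v -> edge (f u) (f v).
Definition hom_exists (G H : digraph) : Prop := exists f, @hom G H f.
Definition hom_equiv (G H : digraph) : Prop := hom_exists G H /\ hom_exists H G.

Inductive atom (k : nat) : Type :=
| ABot : atom k
| AEq : 'I_k -> 'I_k -> atom k
| AEdge : 'I_k -> 'I_k -> atom k.

(* A primitive positive formula with m free variables:
   exists y_1..y_n (psi_1 /\ ... /\ psi_r); the atoms range over the
   m free variables followed by the n quantified variables. *)
Record ppformula (m : nat) := PPFormula {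
  pp_nex : nat;
  pp_atoms : seq (atom (m + pp_nex)) }.

Definition atom_holds (H : digraph) (k : nat) (s : 'I_k -> vert H) (a : atom k)
  : Prop :=
  match a with
  | ABot => False
  | AEq i j => s i = s j
  | AEdge i j => edge (s i) (s j)
  end.

Definition join_assign (T : Type) (m n : nat) (a : 'I_m -> T) (b : 'I_n -> T)
  (i : 'I_(m + n)) : T :=
  match split i with inl j => a j | inr j => b j end.

Definition pp_holds (H : digraph) (m : nat) (phi : ppformula m)
  (a : 'I_m -> vert H) : Prop :=
  exists b : 'I_(pp_nex phi) -> vert H,
    List.Forall (atom_holds (join_assign a b)) (pp_atoms phi).

Definition pp_power (H : digraph) (d : nat) (phi : ppformula (d + d)) : digraph :=
  @Digraph {ffun 'I_d -> vert H}
    (fun u v => pp_holds phi (join_assign (fun i => u i) (fun i => v i))).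

Definition pp_le (H G : digraph) : Prop :=
  exists (d : nat) (phi : ppformula (d + d)), 0 < d /\ hom_equiv G (@pp_power H d phi).
Definition pp_lt (H G : digraph) : Prop := pp_le H G /\ ~ pp_le G H.

Definition P1 : digraph := @Digraph unit (fun _ _ => False).
Definition P2 : digraph := @Digraph bool (fun a b => a = false /\ b = true).

(* Main.v *)
Require Import Defs.
From mathcomp Require Import all_boot.
From Stdlib Require Import Classical.

Lemma split_l m n (j : 'I_m) : split (lshift n j) = inl j.
Proof. exact: (unsplitK (inl j)). Qed.
Lemma split_r m n (j : 'I_n) : split (rshift m j) = inr j.
Proof. exact: (unsplitK (inr j)). Qed.

Lemma join_l T m n (a : 'I_m -> T) (b : 'I_n -> T) j :
  join_assign a b (lshift n j) = a j.
Proof. by rewrite /join_assign split_l. Qed.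
Lemma join_r T m n (a : 'I_m -> T) (b : 'I_n -> T) j :
  join_assign a b (rshift m j) = b j.
Proof. by rewrite /join_assign split_r. Qed.

Definition phi_bot (d : nat) : ppformula (d + d) := @PPFormula (d + d) 0 [:: ABot _].
Definition phi_top (d : nat) : ppformula (d + d) := @PPFormula (d + d) 0 [::].

Definition i_x1 : 'I_(2 + 2 + 0) := lshift 0 (lshift 2 (ord0 : 'I_2)).
Definition i_x2 : 'I_(2 + 2 + 0) := lshift 0 (lshift 2 (ord_max : 'I_2)).
Definition i_y1 : 'I_(2 + 2 + 0) := lshift 0 (rshift 2 (ord0 : 'I_2)).
Definition i_y2 : 'I_(2 + 2 + 0) := lshift 0 (rshift 2 (ord_max : 'I_2)).

Definition phi_bip : ppformula (2 + 2) :=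
  @PPFormula (2 + 2) 0 [:: AEq i_x1 i_x2; AEdge i_y1 i_y2].

Lemma bip_edge (G : digraph) (u v : {ffun 'I_2 -> vert G}) :
  @edge (pp_power G phi_bip) u v <-> (u ord0 = u ord_max /\ edge (v ord0) (v ord_max)).
Proof.
rewrite /= /pp_holds /=; split.
- move=> [b H]; inversion H as [|? ? H1 H2]; subst.
  inversion H2 as [|? ? H3 H4]; subst.
  move: H1 H3; rewrite /atom_holds /i_x1 /i_x2 /i_y1 /i_y2 !join_l !join_r.
  by [].
- move=> [H1 H2]; exists (fun i : 'I_0 => u ord0).
  constructor; first by rewrite /= /i_x1 /i_x2 !join_l.
  constructor; last by constructor.
  by rewrite /= /i_y1 /i_y2 !join_l !join_r.
Qed.

Lemma unit_ffun_eq d (a b : {ffun 'I_d -> unit}) : a = b.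
Proof. by apply/ffunP => i; case: (a i); case: (b i). Qed.

Theorem mainTheorem3 :
  pp_lt P2 P1 /\ (forall G : digraph, pp_lt G P1 -> pp_le G P2).
Proof.
split.
  split.
    exists 1, (phi_bot 1); split => //; split.
      exists (fun _ => [ffun _ => false]) => u v [].
    exists (fun _ => tt) => u v [b H]; inversion H as [|? ? H1]; exact: H1.
  move=> [d [phi [_ [[f Hf] [g Hg]]]]].
  have E := Hf false true (conj erefl erefl).
  rewrite (@unit_ffun_eq d (f true) (f false)) in E.
  by case: (Hg _ _ E) => -> .
move=> G [[d [phi [hd [[f _] _]]]] HnP1].
have v : vert G by exact: (f tt (Ordinal hd)).
destruct (classic (exists w : vert G, edge w w)) as [[w Hw] | Hnl].
  exfalso; apply: HnP1; exists 1, (phi_top 1); split => //; split.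
    by exists (fun _ => [ffun _ => tt]) => a b _; exists (fun i : 'I_0 => tt).
  by exists (fun _ => w).
destruct (classic (exists a b : vert G, edge a b)) as [[a [b Hab]] | Hne].
  exists 2, phi_bip; split => //; split.
    exists (fun x : bool => if x then [ffun i : 'I_2 => if i == ord0 then a else b]
                       else [ffun _ => a]).
    move=> x y [-> ->]; apply/bip_edge; rewrite !ffunE /=; split => //.
  exists (fun p : {ffun 'I_2 -> vert G} => p ord0 != p ord_max).
  move=> p q /bip_edge [H1 H2]; split; first by rewrite H1 eqxx.
  apply/negP => /eqP He; apply: Hnl; exists (q ord0); by rewrite {2}He.
exfalso; apply: HnP1; exists 1, (phi_bot 1); split => //; split.
  exists (fun _ => [ffun _ => tt]) => x y Hxy; exfalso; apply: Hne; by exists x, y.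
exists (fun _ => v) => x y [b H]; inversion H as [|? ? H1]; case: H1.
Qed.
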